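(* For every $\epsilon>0$ there is $L_0>\pi\sqrt2$ such that for all $L>L_0$, $b_L(L/2)<2+\epsilon$.
   Context: For $\alpha\in(0,1/\sqrt2)$ let $L_\alpha=\pi/\mathrm{AGM}(\alpha,\tfrac12\sqrt{1+2\alpha^2})$ (arithmetic–geometric mean); $\alpha\mapsto L_\alpha$ is a decreasing bijection from $(0,1/\sqrt2)$ onto $(\pi\sqrt2,\infty)$. For $L>\pi\sqrt2$ let $\alpha$ satisfy $L_\alpha=L$ and let $x_0>y_0>0$ satisfy $x_0^2+y_0^2=1$, $x_0y_0=\alpha^2$. Let $(x_L,y_L,z_L)(t)$ solve $x'=-xz$, $y'=yz$, $z'=x^2-y^2$ ($'=d/dt$) with initial value $(x_0,y_0,0)$, and let $a_L,b_L$ solve $a'=2x_L+az_L$, $b'=2y_L-bz_L$ with $a_L(0)=b_L(0)=0$. *)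

(* Defs.v *)
From Stdlib Require Import Reals.
From Coquelicot Require Import Coquelicot.
Open Scope R_scope.

Fixpoint agm_iter (a b : R) (n : nat) : R * R :=
  match n with
  | O => (a, b)
  | S n => let p := agm_iter a b n in ((fst p + snd p) / 2, sqrt (fst p * snd p))
  end.

Definition AGM (a b : R) : R := real (Lim_seq (fun n => fst (agm_iter a b n))).

Definition L_of (alpha : R) : R := PI / AGM alpha (sqrt (1 + 2 * alpha ^ 2) / 2).

(* Main.v *)
Require Import Defs.
From Stdlib Require Import Reals Lra Psatz.
From Coquelicot Require Import Coquelicot.
Open Scope R_scope.

Definition Rf (a b t : R) := sqrt (a^2 * cos t ^2 + b^2 * sin t ^2).

Lemma Rf_inner_pos a b t : 0 < a -> 0 < b -> 0 < a^2 * cos t ^2 + b^2 * sin t ^2.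
Proof.
  intros Ha Hb. pose proof (sin2_cos2 t). unfold Rsqr in H.
  assert (Hc : cos t ^ 2 + sin t ^ 2 = 1) by lra.
  set (c2 := cos t ^ 2) in *. set (s2 := sin t ^ 2) in *.
  assert (0 <= c2) by (unfold c2; nra). assert (0 <= s2) by (unfold s2; nra).
  assert (0 < a^2) by nra. assert (0 < b^2) by nra.
  destruct (Rle_lt_dec c2 0).
  - assert (s2 = 1) by lra. nra.
  - assert (0 < a^2 * c2) by nra. nra.
Qed.

Lemma Rf_pos a b t : 0 < a -> 0 < b -> 0 < Rf a b t.
Proof. intros. unfold Rf. apply sqrt_lt_R0. now apply Rf_inner_pos. Qed.

Lemma Rf_sq a b t : 0 < a -> 0 < b -> Rf a b t ^ 2 = a^2 * cos t ^2 + b^2 * sin t ^2.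
Proof. intros. unfold Rf. rewrite <- Rsqr_pow2. rewrite Rsqr_sqrt; auto. left; now apply Rf_inner_pos. Qed.

Lemma Rf_deriv a b t : 0 < a -> 0 < b ->
  is_derive (Rf a b) t ((b^2 - a^2) * sin t * cos t / Rf a b t).
Proof.
  intros Ha Hb. unfold Rf. auto_derive.
  - now apply Rf_inner_pos.
  - assert (E: a * (a * 1) * (cos t * (cos t * 1)) + b * (b * 1) * (sin t * (sin t * 1)) = a ^ 2 * cos t ^ 2 + b ^ 2 * sin t ^ 2) by ring.
    rewrite E. field. apply Rgt_not_eq, sqrt_lt_R0. now apply Rf_inner_pos.
Qed.
Definition Lam a b t := 2*t - atan ((a-b) * sin t * cos t / (a * cos t ^2 + b * sin t ^2)).
Lemma lam_alg a b s c : s^2 + c^2 = 1 -> 0 < a -> 0 < b -> a * c^2 + b * s^2 <> 0 -> a^2 * c^2 + b^2 * s^2 <> 0 ->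
 (2 * 1 +
 -
 ((((a - b) * (1 * c) * c + (a - b) * s * (1 * - s)) *
   / (a * (c * (c * 1)) + b * (s * (s * 1))) +
   (a - b) * s * c *
   (-
    (a * (1 * - s * ((1 + 1) * (c * 1))) +
     b * (1 * c * ((1 + 1) * (s * 1)))) *
    /
    ((a * (c * (c * 1)) + b * (s * (s * 1))) *
     (a * (c * (c * 1)) + b * (s * (s * 1)))))) *
  /
  (1 +
   (a - b) * s * c *
   / (a * (c * (c * 1)) + b * (s * (s * 1))) *
   ((a - b) * s * c *
    / (a * (c * (c * 1)) + b * (s * (s * 1))) * 1))) =
 (a ^ 2 * c ^ 2 + b ^ 2 * s ^ 2 + a * b) /
 (a ^ 2 * c ^ 2 + b ^ 2 * s ^ 2)).
Proof.
  intros H Ha Hb HD HN.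
  set (D := a * c^2 + b * s^2). set (N := a^2 * c^2 + b^2 * s^2).
  assert (E1 : 1 + (a - b) * s * c * / (a * (c * (c * 1)) + b * (s * (s * 1))) *
   ((a - b) * s * c * / (a * (c * (c * 1)) + b * (s * (s * 1))) * 1) = N / D^2).
  { replace (a * (c * (c * 1)) + b * (s * (s * 1))) with D by (unfold D; ring).
    apply (Rmult_eq_reg_r (D^2)); [|apply pow_nonzero; auto].
    field_simplify; auto.
    transitivity (N*(s^2+c^2)); [unfold N, D; ring | rewrite H; ring]. }
  rewrite E1.
  replace (a * (c * (c * 1)) + b * (s * (s * 1))) with D by (unfold D; ring).
  apply (Rmult_eq_reg_r (N * D^2)); [| apply Rmult_integral_contrapositive; split; [auto| apply pow_nonzero; auto]].
  field_simplify; auto.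
  apply Rminus_diag_uniq. transitivity (D^2*(1-(s^2+c^2))*(N - a*b*(1+(s^2+c^2)))).
  unfold D, N; ring. rewrite H; ring.
Qed.

Lemma D_pos a b t : 0 < a -> 0 < b -> 0 < a * cos t ^2 + b * sin t ^2.
Proof.
  intros Ha Hb. pose proof (Rf_inner_pos (sqrt a) (sqrt b) t (sqrt_lt_R0 _ Ha) (sqrt_lt_R0 _ Hb)).
  rewrite !pow2_sqrt in H by lra. exact H.
Qed.

Lemma sc1 t : sin t ^ 2 + cos t ^ 2 = 1.
Proof. pose proof (sin2_cos2 t). unfold Rsqr in H. nra. Qed.

Lemma Lam_deriv a b t : 0 < a -> 0 < b ->
  is_derive (Lam a b) t ((Rf a b t ^2 + a*b) / Rf a b t ^ 2).
Proof.
  intros Ha Hb. rewrite Rf_sq by auto. pose proof (D_pos a b t Ha Hb).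
  unfold Lam. auto_derive.
  - lra.
  - apply lam_alg; auto using sc1; try lra. pose proof (Rf_inner_pos a b t Ha Hb); lra.
Qed.

Lemma Rf_Lam a b t : 0 < a -> 0 < b ->
  Rf ((a+b)/2) (sqrt (a*b)) (Lam a b t) = (Rf a b t ^2 + a*b)/(2 * Rf a b t).
Proof.
  intros Ha Hb. pose proof (Rf_pos a b t Ha Hb) as HR. pose proof (Rf_sq a b t Ha Hb) as HR2.
  pose proof (D_pos a b t Ha Hb) as HD. pose proof (sc1 t) as Hu.
  set (R := Rf a b t) in *.
  set (s := sin t) in *. set (c := cos t) in *.
  set (D := a * c^2 + b * s^2) in *.
  set (w := (a-b) * s * c / D).
  assert (Hw : 0 < 1 + w^2) by nra.
  set (q := sqrt (1 + w^2)).
  assert (Hq : q ^ 2 = 1 + w^2) by (apply pow2_sqrt; lra).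
  assert (Hq0 : 0 < q) by (apply sqrt_lt_R0; lra).
  assert (HcL : cos (Lam a b t) = ((c^2 - s^2) + 2 * s * c * w) / q).
  { unfold Lam. fold s c D w. rewrite cos_minus, cos_2a, sin_2a, cos_atan, sin_atan.
    unfold Rsqr. replace (1 + w*w) with (1+w^2) by ring. change (sqrt (1 + w^2)) with q. fold s c. field. lra. }
  assert (HsL : sin (Lam a b t) = (2 * s * c - (c^2 - s^2) * w) / q).
  { unfold Lam. fold s c D w. rewrite sin_minus, cos_2a, sin_2a, cos_atan, sin_atan.
    unfold Rsqr. replace (1 + w*w) with (1+w^2) by ring. change (sqrt (1 + w^2)) with q. fold s c. field. lra. }
  unfold Rf at 1. rewrite HcL, HsL.
  rewrite <- (sqrt_pow2 ((R ^ 2 + a * b) / (2 * R))).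
  2:{ apply Rlt_le. apply Rdiv_lt_0_compat; nra. }
  f_equal. rewrite pow2_sqrt by nra.
  replace (((R ^ 2 + a * b) / (2 * R)) ^ 2) with ((R^2 + a*b*(s^2+c^2))^2 * (s^2+c^2) / (4 * R^2)).
  2:{ rewrite Hu. field. lra. }
  rewrite HR2. unfold w.
  replace (((c ^ 2 - s ^ 2 + 2 * s * c * ((a - b) * s * c / D)) / q) ^ 2) with
     ((c ^ 2 - s ^ 2 + 2 * s * c * ((a - b) * s * c / D)) ^ 2 / q ^ 2) by (field; lra).
  replace (((2 * s * c - (c ^ 2 - s ^ 2) * ((a - b) * s * c / D)) / q) ^ 2) with
     ((2 * s * c - (c ^ 2 - s ^ 2) * ((a - b) * s * c / D)) ^ 2 / q ^ 2) by (field; lra).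
  rewrite Hq. unfold w.
  assert (HN : 0 < a ^ 2 * c ^ 2 + b ^ 2 * s ^ 2) by (rewrite <- HR2; nra).
  assert (HE : 1 + ((a - b) * s * c / D) ^ 2 = (a ^ 2 * c ^ 2 + b ^ 2 * s ^ 2) * (s^2 + c^2) / D^2).
  assert (HD' : a*c^2+b*s^2 <> 0) by (unfold D in HD; lra).
  { unfold D. field; lra. }
  rewrite HE. unfold D. field. split; [nra|split; [unfold D in HD; lra|lra]].
Qed.

Lemma deriv_cont (g g' : R -> R) : (forall t, is_derive g t (g' t)) -> forall t, continuity_pt g t.
Proof.
  intros H t. apply continuity_pt_filterlim. apply (ex_derive_continuous (V:=R_NormedModule)). exists (g' t). apply H.
Qed.

Lemma mono_deriv (g g' : R -> R) p q : p <= q -> (forall t, is_derive g t (g' t)) ->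
  (forall t, p <= t <= q -> 0 <= g' t) -> g p <= g q.
Proof.
  intros Hpq Hd Hpos.
  destruct (MVT_gen g p q g') as [c [Hc Heq]].
  - intros x _. apply Hd.
  - intros x _. apply (deriv_cont g g' Hd).
  - rewrite Rmin_left in Hc by lra. rewrite Rmax_right in Hc by lra.
    assert (0 <= g' c * (q - p)) by (apply Rmult_le_pos; [apply Hpos; lra| lra]). lra.
Qed.

Lemma const_deriv (g : R -> R) p q : (forall t, is_derive g t 0) -> g p = g q.
Proof.
  intros Hd.
  destruct (MVT_gen g q p (fun _ => 0)) as [c [Hc Heq]].
  - intros x _. apply Hd.
  - intros x _. apply (deriv_cont g (fun _ => 0) Hd).
  - lra.
Qed.

Lemma antideriv (f : R -> R) : (forall t, continuous f t) -> exists G, forall t, is_derive G t (f t).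
Proof.
  intros Hc. exists (fun t => RInt f 0 t). intros t.
  apply is_derive_RInt with 0.
  - apply filter_forall. intros u. apply (RInt_correct (V:=R_CompleteNormedModule)). apply (ex_RInt_continuous (V:=R_CompleteNormedModule)). intros; apply Hc.
  - apply Hc.
Qed.

Lemma invRf_cont a b t : 0 < a -> 0 < b -> continuous (fun t => / Rf a b t) t.
Proof.
  intros Ha Hb. apply (ex_derive_continuous (V:=R_NormedModule)).
  eexists. apply (is_derive_inv (Rf a b)). apply Rf_deriv; auto.
  apply Rgt_not_eq, Rf_pos; auto.
Qed.

Lemma Rf_le_max a b t : 0 < a -> 0 < b -> Rf a b t <= Rmax a b.
Proof.
  intros Ha Hb. unfold Rf. rewrite <- (sqrt_pow2 (Rmax a b)) by (apply Rle_trans with a; [lra| apply Rmax_l]).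
  apply sqrt_le_1_alt. pose proof (sc1 t). pose proof (Rmax_l a b). pose proof (Rmax_r a b).
  assert (a^2 <= Rmax a b ^2) by nra. assert (b^2 <= Rmax a b ^2) by nra.
  assert (0 <= cos t ^2) by nra. assert (0 <= sin t ^2) by nra. nra.
Qed.

Lemma Rf_ge_min a b t : 0 < a -> 0 < b -> Rmin a b <= Rf a b t.
Proof.
  intros Ha Hb. unfold Rf. assert (0 < Rmin a b) by (apply Rmin_glb_lt; auto).
  rewrite <- (sqrt_pow2 (Rmin a b)) by lra.
  apply sqrt_le_1_alt. pose proof (sc1 t). pose proof (Rmin_l a b). pose proof (Rmin_r a b).
  assert (Rmin a b ^2 <= a^2) by nra. assert (Rmin a b^2 <= b ^2) by nra.
  assert (0 <= cos t ^2) by nra. assert (0 <= sin t ^2) by nra. nra.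
Qed.

Lemma agm_shift a b n : agm_iter a b (S n) = agm_iter ((a+b)/2) (sqrt (a*b)) n.
Proof.
  induction n.
  - reflexivity.
  - change (agm_iter a b (S (S n))) with
      (let p := agm_iter a b (S n) in ((fst p + snd p) / 2, sqrt (fst p * snd p))).
    rewrite IHn. reflexivity.
Qed.

Lemma Lam_0 a b : Lam a b 0 = 0.
Proof. unfold Lam. rewrite sin_0. replace ((a - b) * 0 * cos 0 / (a * cos 0 ^ 2 + b * 0 ^ 2)) with 0 by (unfold Rdiv; ring).
  rewrite atan_0. ring. Qed.

Lemma Lam_sc a b u : sin u * cos u = 0 -> Lam a b u = 2 * u.
Proof. intros H. unfold Lam. assert (E : (a-b)*sin u*cos u = 0) by (rewrite Rmult_assoc, H; ring).
  rewrite E. unfold Rdiv. rewrite Rmult_0_l, atan_0. ring. Qed.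

Lemma landen_step a b G G1 u : 0 < a -> 0 < b ->
  (forall t, is_derive G t (/ Rf a b t)) ->
  (forall t, is_derive G1 t (/ Rf ((a+b)/2) (sqrt (a*b)) t)) ->
  G u - G 0 = (G1 (Lam a b u) - G1 (Lam a b 0)) / 2.
Proof.
  intros Ha Hb HG HG1.
  assert (H : forall t, is_derive (fun t => G t - /2 * G1 (Lam a b t)) t 0).
  { intros t. pose proof (Rf_pos a b t Ha Hb).
    assert (HL := Lam_deriv a b t Ha Hb).
    assert (HC := is_derive_comp G1 (Lam a b) t _ _ (HG1 (Lam a b t)) HL).
    assert (HD := is_derive_minus _ _ t _ _ (HG t) (is_derive_scal _ t (/2) _ HC)).
    match type of HD with is_derive _ _ ?v => assert (E : v = 0) end.
    { unfold minus, scal, plus, opp, mult; simpl. unfold mult; simpl. rewrite Rf_Lam by auto.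
      field. split; [lra|]. nra. }
    rewrite E in HD. exact HD. }
  pose proof (const_deriv _ u 0 H). simpl in H0. lra.
Qed.

Lemma agm_pos a b n : 0 < a -> 0 < b -> 0 < fst (agm_iter a b n) /\ 0 < snd (agm_iter a b n).
Proof.
  intros Ha Hb. induction n; simpl; auto. destruct IHn. split. lra. apply sqrt_lt_R0. nra.
Qed.

Lemma landen_bound n : forall a b G u, 0 < a -> 0 < b ->
  (forall t, is_derive G t (/ Rf a b t)) -> 0 <= u -> sin u * cos u = 0 ->
  u <= (G u - G 0) * Rmax (fst (agm_iter a b n)) (snd (agm_iter a b n)).
Proof.
  induction n; intros a b G u Ha Hb HG Hu Hsc.
  - simpl. set (M := Rmax a b). assert (HM : 0 < M) by (apply Rlt_le_trans with a; [lra|apply Rmax_l]).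
    assert (H := mono_deriv (fun t => M * G t - t) (fun t => M * / Rf a b t - 1) 0 u Hu).
    cut (M * G 0 - 0 <= M * G u - u). nra. apply H.
    + intros t. exact (is_derive_minus _ _ t _ _ (is_derive_scal _ t M _ (HG t)) (is_derive_id t)).
    + intros t _. pose proof (Rf_pos a b t Ha Hb). pose proof (Rf_le_max a b t Ha Hb).
      fold M in H1. assert (1 <= M * / Rf a b t); [|lra].
      apply (Rmult_le_reg_r (Rf a b t)); auto. field_simplify; lra.
  - rewrite agm_shift.
    assert (Ha1 : 0 < (a+b)/2) by lra. assert (Hb1 : 0 < sqrt (a*b)) by (apply sqrt_lt_R0; nra).
    destruct (antideriv (fun t => / Rf ((a+b)/2) (sqrt (a*b)) t)) as [G1 HG1].
    { intros t. apply invRf_cont; auto. }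
    assert (Hs : sin (2*u) * cos (2*u) = 0) by (rewrite sin_2a; replace (2*sin u*cos u) with (2*(sin u*cos u)) by ring; rewrite Hsc; ring).
    pose proof (IHn _ _ G1 (2*u) Ha1 Hb1 HG1 ltac:(lra) Hs).
    pose proof (landen_step a b G G1 u Ha Hb HG HG1).
    rewrite Lam_0, Lam_sc in H0 by auto. 
    set (M := Rmax _ _) in *. nra.
Qed.
Lemma dmul (f g : R -> R) t df dg : is_derive f t df -> is_derive g t dg ->
  is_derive (fun t => f t * g t) t (df * g t + f t * dg).
Proof. intros. exact (is_derive_mult f g t df dg H H0 Rmult_comm). Qed.
Lemma dplus (f g : R -> R) t df dg : is_derive f t df -> is_derive g t dg ->
  is_derive (fun t => f t + g t) t (df + dg).
Proof. intros. exact (is_derive_plus f g t df dg H H0). Qed.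
Lemma dminus (f g : R -> R) t df dg : is_derive f t df -> is_derive g t dg ->
  is_derive (fun t => f t - g t) t (df - dg).
Proof. intros. exact (is_derive_minus f g t df dg H H0). Qed.
Lemma dcomp (f g : R -> R) t df dg : is_derive f (g t) df -> is_derive g t dg ->
  is_derive (fun t => f (g t)) t (dg * df).
Proof. intros. exact (is_derive_comp f g t df dg H H0). Qed.
Lemma dscal (f : R -> R) c t df : is_derive f t df -> is_derive (fun t => c * f t) t (c * df).
Proof. intros. exact (is_derive_scal f t c df H). Qed.
Lemma dsq (f : R -> R) t df : is_derive f t df -> is_derive (fun t => f t ^ 2) t (2 * f t * df).
Proof. intros. apply (is_derive_ext (fun t => f t * f t)). intros; simpl; ring.
  replace (2 * f t * df) with (df * f t + f t * df) by ring. apply dmul; auto. Qed.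
Lemma dopp (f : R -> R) t df : is_derive f t df -> is_derive (fun t => - f t) t (- df).
Proof. intros. exact (is_derive_opp f t df H). Qed.
Lemma dext (f : R -> R) (t l l' : R) : is_derive f t l -> l = l' -> is_derive f t l'.
Proof. intros; subst; auto. Qed.

Lemma sphere_inv (x y z : R -> R) :
  (forall t, is_derive x t (- (x t * z t))) ->
  (forall t, is_derive y t (y t * z t)) ->
  (forall t, is_derive z t (x t ^ 2 - y t ^ 2)) ->
  forall t, x t ^2 + y t ^2 + z t ^2 = x 0 ^2 + y 0 ^2 + z 0 ^2.
Proof.
  intros Hx Hy Hz t. apply (const_deriv (fun t => x t ^2 + y t ^2 + z t ^2)).
  intros s. eapply dext. apply dplus. apply dplus. apply dsq, Hx. apply dsq, Hy. apply dsq, Hz.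
  ring.
Qed.

Section Param.
Variables p q : R.
Definition Xf (t : R) := Rf p q t.
Definition Yf (t : R) := p * q * / Rf p q t.
Definition Zf (t : R) := (p^2 - q^2) * (sin t * cos t) * / Rf p q t.
End Param.

Lemma XYZ_sphere p q t : 0 < p -> 0 < q -> p^2 + q^2 = 1 ->
  Xf p q t ^2 + Yf p q t ^2 + Zf p q t ^2 = 1.
Proof.
  intros Hp Hq H1. unfold Xf, Yf, Zf. pose proof (Rf_pos p q t Hp Hq). pose proof (Rf_sq p q t Hp Hq).
  pose proof (sc1 t). set (R := Rf p q t) in *. set (s := sin t) in *. set (c := cos t) in *.
  apply (Rmult_eq_reg_r (R^2)); [| nra].
  field_simplify; [| lra]. replace (R^4) with ((R^2)^2) by ring. rewrite H0.
  apply Rminus_diag_uniq.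
  transitivity (p^2*q^2*(1-(s^2+c^2)^2) + (p^2*c^2+q^2*s^2)*((p^2+q^2)*(s^2+c^2) - 1)); [ring | rewrite H1, H2; ring].
Qed.

Lemma Xf_ode p q t : 0 < p -> 0 < q ->
  is_derive (Xf p q) t (/ Rf p q t * (- (Xf p q t * Zf p q t))).
Proof.
  intros Hp Hq. pose proof (Rf_pos p q t Hp Hq). unfold Xf, Zf.
  eapply dext. apply Rf_deriv; auto. field. lra.
Qed.

Lemma Yf_ode p q t : 0 < p -> 0 < q ->
  is_derive (Yf p q) t (/ Rf p q t * (Yf p q t * Zf p q t)).
Proof.
  intros Hp Hq. pose proof (Rf_pos p q t Hp Hq). unfold Yf, Zf.
  eapply dext. apply dscal. apply is_derive_inv. apply Rf_deriv; auto. lra.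
  field. lra.
Qed.

Lemma Zf_ode p q t : 0 < p -> 0 < q -> p^2 + q^2 = 1 ->
  is_derive (Zf p q) t (/ Rf p q t * (Xf p q t ^2 - Yf p q t ^2)).
Proof.
  intros Hp Hq H1. pose proof (Rf_pos p q t Hp Hq). pose proof (Rf_sq p q t Hp Hq). pose proof (sc1 t).
  unfold Xf, Yf, Zf.
  eapply dext. apply dmul. apply dscal. apply dmul. apply is_derive_sin. apply is_derive_cos.
  apply is_derive_inv. apply Rf_deriv; auto. lra.
  lazymatch goal with |- ?l = ?r => let l' := eval cbv beta in l in change (l' = r) end.
  set (R := Rf p q t) in *. set (s := sin t) in *. set (c := cos t) in *.
  apply (Rmult_eq_reg_r (R^3)); [| apply pow_nonzero; lra].
  field_simplify; [|lra|]. 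
  all: try change (Rf p q t) with R. all: try change (sin t) with s. all: try change (cos t) with c.
  2: lra.
  replace (R^4) with ((R^2)^2) by ring. rewrite H0.
  apply Rminus_diag_uniq.
  transitivity (p^2*q^2*(1 - (s^2+c^2)^2)); [ring | rewrite H2; ring].
Qed.
Lemma cross1 W u v : W^2 <= 4 -> W * u * v <= u^2 + v^2.
Proof. intros. assert (0 <= (u - W * v / 2)^2) by apply pow2_ge_0.
  assert (W^2 * v^2 <= 4 * v^2) by (apply Rmult_le_compat_r; nra). nra. Qed.
Lemma cross2 W u v : W^2 <= 4 -> - (W * u * v) <= u^2 + v^2.
Proof. intros. assert (0 <= (u + W * v / 2)^2) by apply pow2_ge_0.
  assert (W^2 * v^2 <= 4 * v^2) by (apply Rmult_le_compat_r; nra). nra. Qed.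

Lemma gron_alg u1 u2 u3 X Y Z R q : u1^2+u2^2+u3^2 = 1 -> X^2+Y^2+Z^2 = 1 -> 0<q -> q <= R ->
 2*(u1-X)*(/R*(-(u1*u3)) - /R*(-(X*Z))) + 2*(u2-Y)*(/R*(u2*u3) - /R*(Y*Z))
   + 2*(u3-Z)*(/R*(u1^2-u2^2) - /R*(X^2-Y^2))
 <= 8/q * ((u1-X)^2+(u2-Y)^2+(u3-Z)^2).
Proof.
  intros Hu HX Hq HR.
  assert (E : 2*(u1-X)*(/R*(-(u1*u3)) - /R*(-(X*Z))) + 2*(u2-Y)*(/R*(u2*u3) - /R*(Y*Z))
   + 2*(u3-Z)*(/R*(u1^2-u2^2) - /R*(X^2-Y^2)) = 2 / R * ((u1-X) * (-((u1-X)*u3) - X*(u3-Z)) + (u2-Y) * ((u2-Y)*u3 + Y*(u3-Z)) + (u3-Z) * ((u1-X)*(u1+X) - (u2-Y)*(u2+Y)))).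
  { field. lra. }
  rewrite E.
  set (d1 := u1 - X). set (d2 := u2 - Y). set (d3 := u3 - Z).
  set (e := d1^2 + d2^2 + d3^2).
  set (B := d1 * (-(d1*u3) - X*d3) + d2 * (d2*u3 + Y*d3) + d3 * (d1*(u1+X) - d2*(u2+Y))).
  assert (Hu3 : u3^2 <= 1) by nra. assert (HX1 : X^2 <= 1) by nra. assert (HY1 : Y^2 <= 1) by nra.
  assert (HW1 : (u1+X)^2 <= 4) by nra. assert (HW2 : (u2+Y)^2 <= 4) by nra.
  assert (B1 : - (u3 * d1 * d1) <= d1^2 + d1^2) by (apply cross2; nra).
  assert (B2 : - (X * d1 * d3) <= d1^2 + d3^2) by (apply cross2; nra).
  assert (B3 : u3 * d2 * d2 <= d2^2 + d2^2) by (apply cross1; nra).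
  assert (B4 : Y * d2 * d3 <= d2^2 + d3^2) by (apply cross1; nra).
  assert (B5 : (u1+X) * d3 * d1 <= d3^2 + d1^2) by (apply cross1; nra).
  assert (B6 : - ((u2+Y) * d3 * d2) <= d3^2 + d2^2) by (apply cross2; nra).
  assert (HB : B <= 4 * e) by (unfold B, e; nra).
  assert (He : 0 <= e) by (unfold e; nra).
  assert (0 < R) by lra.
  assert (2 / R * B <= 2 / R * (4 * e)) by (apply Rmult_le_compat_l; [apply Rlt_le, Rdiv_lt_0_compat; lra| lra]).
  assert (2 / R * (4 * e) <= 8 / q * e).
  { unfold Rdiv. replace (2 * / R * (4 * e)) with (8 * e * / R) by ring.
    replace (8 * / q * e) with (8 * e * / q) by ring. apply Rmult_le_compat_l. lra.
    apply Rinv_le_contravar; lra. }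
  lra.
Qed.

Lemma uniq_traj p q (x y z F : R -> R) : 0 < q -> q <= p -> 0 < p -> p^2 + q^2 = 1 ->
  (forall t, is_derive x t (- (x t * z t))) ->
  (forall t, is_derive y t (y t * z t)) ->
  (forall t, is_derive z t (x t ^ 2 - y t ^ 2)) ->
  x 0 = p -> y 0 = q -> z 0 = 0 ->
  (forall t, is_derive F t (/ Rf p q t)) -> F 0 = 0 ->
  forall t, 0 <= t -> x (F t) = Xf p q t /\ y (F t) = Yf p q t /\ z (F t) = Zf p q t.
Proof.
  intros Hq Hqp Hp H1 Hx Hy Hz Hx0 Hy0 Hz0 HF HF0 t Ht.
  assert (Hsph : forall s, x s ^2 + y s ^2 + z s ^2 = 1).
  { intros s. rewrite (sphere_inv x y z Hx Hy Hz s), Hx0, Hy0, Hz0. lra. }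
  set (e := fun s => (x (F s) - Xf p q s)^2 + (y (F s) - Yf p q s)^2 + (z (F s) - Zf p q s)^2).
  set (K := 8 / q).
  set (h := fun s => e s * exp (- (K * s))).
  assert (He : forall s, is_derive e s
     (2 * (x (F s) - Xf p q s) * (/ Rf p q s * (- (x (F s) * z (F s))) - / Rf p q s * (- (Xf p q s * Zf p q s)))
    + 2 * (y (F s) - Yf p q s) * (/ Rf p q s * (y (F s) * z (F s)) - / Rf p q s * (Yf p q s * Zf p q s))
    + 2 * (z (F s) - Zf p q s) * (/ Rf p q s * (x (F s) ^ 2 - y (F s) ^ 2) - / Rf p q s * (Xf p q s ^2 - Yf p q s ^2)))).
  { intros s. unfold e.
    apply (dplus (fun s => (x (F s) - Xf p q s)^2 + (y (F s) - Yf p q s)^2) (fun s => (z (F s) - Zf p q s)^2)).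
    apply (dplus (fun s => (x (F s) - Xf p q s)^2) (fun s => (y (F s) - Yf p q s)^2)).
    - apply (dsq (fun s => x (F s) - Xf p q s)). apply (dminus (fun s => x (F s)) (Xf p q)). apply (dcomp x F s). apply Hx. apply HF. apply Xf_ode; auto.
    - apply (dsq (fun s => y (F s) - Yf p q s)). apply (dminus (fun s => y (F s)) (Yf p q)). apply (dcomp y F s). apply Hy. apply HF. apply Yf_ode; auto.
    - apply (dsq (fun s => z (F s) - Zf p q s)). apply (dminus (fun s => z (F s)) (Zf p q)). apply (dcomp z F s). apply Hz. apply HF. apply Zf_ode; auto. }
  assert (Hh : forall s, is_derive (fun s => - h s) s
     (- ((2 * (x (F s) - Xf p q s) * (/ Rf p q s * (- (x (F s) * z (F s))) - / Rf p q s * (- (Xf p q s * Zf p q s)))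
    + 2 * (y (F s) - Yf p q s) * (/ Rf p q s * (y (F s) * z (F s)) - / Rf p q s * (Yf p q s * Zf p q s))
    + 2 * (z (F s) - Zf p q s) * (/ Rf p q s * (x (F s) ^ 2 - y (F s) ^ 2) - / Rf p q s * (Xf p q s ^2 - Yf p q s ^2)))
      * exp (- (K * s)) + e s * (- K * exp (- (K * s)))))).
  { intros s. unfold h. apply (dopp (fun s => e s * exp (- (K * s)))). apply (dmul e (fun s => exp (- (K * s)))). apply He.
    eapply dext. apply (dcomp exp (fun s => - (K * s))). apply is_derive_exp.
    apply (dopp (fun s => K * s)). apply (dscal (fun s => s)). apply is_derive_id. unfold one; simpl. ring. }
  assert (Hm := mono_deriv (fun s => - h s) _ 0 t Ht Hh).
  assert (Hh0 : h 0 = 0).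
  { unfold h, e. rewrite HF0, Hx0, Hy0, Hz0. unfold Xf, Yf, Zf, Rf.
    rewrite cos_0, sin_0. replace (p ^ 2 * 1 ^ 2 + q ^ 2 * 0 ^ 2) with (p^2) by ring.
    rewrite sqrt_pow2 by lra. field. lra. }
  assert (Hht : h t <= 0).
  { cut (- h 0 <= - h t). lra. apply Hm. intros s _.
    assert (G := gron_alg (x (F s)) (y (F s)) (z (F s)) (Xf p q s) (Yf p q s) (Zf p q s) (Rf p q s) q
       (Hsph (F s)) (XYZ_sphere p q s Hp Hq H1) Hq).
    assert (Hmin : q <= Rf p q s).
    { pose proof (Rf_ge_min p q s Hp Hq). unfold Rmin in H. destruct (Rle_dec p q); lra. }
    specialize (G Hmin). fold K in G. fold (e s) in G.
    pose proof (exp_pos (- (K * s))). nra. }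
  assert (Het : e t = 0).
  { unfold h in Hht. pose proof (exp_pos (- (K * t))).
    assert (0 <= e t).
    { unfold e. pose proof (pow2_ge_0 (x (F t) - Xf p q t)). pose proof (pow2_ge_0 (y (F t) - Yf p q t)).
      pose proof (pow2_ge_0 (z (F t) - Zf p q t)). lra. }
    destruct (Rle_lt_dec (e t) 0); [lra|]. pose proof (Rmult_lt_0_compat _ _ r H). lra. }
  unfold e in Het.
  assert (A1 : 0 <= (x (F t) - Xf p q t)^2) by apply pow2_ge_0.
  assert (A2 : 0 <= (y (F t) - Yf p q t)^2) by apply pow2_ge_0.
  assert (A3 : 0 <= (z (F t) - Zf p q t)^2) by apply pow2_ge_0.
  split; [|split]; apply Rminus_diag_uniq; nra.
Qed.

Lemma sR_deriv p q t : 0 < p -> 0 < q ->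
  is_derive (fun t => sin t * / Rf p q t) t (p^2 * cos t / Rf p q t ^ 3).
Proof.
  intros Hp Hq. pose proof (Rf_pos p q t Hp Hq). pose proof (Rf_sq p q t Hp Hq). pose proof (sc1 t).
  eapply dext. apply dmul. apply is_derive_sin. apply is_derive_inv. apply Rf_deriv; auto. lra.
  lazymatch goal with |- ?l = ?r => let l' := eval cbv beta in l in change (l' = r) end.
  set (R := Rf p q t) in *. set (s := sin t) in *. set (c := cos t) in *.
  apply (Rmult_eq_reg_r (R^3)); [| apply pow_nonzero; lra].
  field_simplify; [|lra|lra].
  all: try change (Rf p q t) with R. all: try change (sin t) with s. all: try change (cos t) with c.
  rewrite H0. apply Rminus_diag_uniq.
  transitivity (c*p^2*((s^2+c^2) - 1)); [ring| rewrite H1; ring].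
Qed.

Lemma cR_deriv p q t : 0 < p -> 0 < q ->
  is_derive (fun t => cos t * / Rf p q t) t (- (q^2 * sin t / Rf p q t ^ 3)).
Proof.
  intros Hp Hq. pose proof (Rf_pos p q t Hp Hq). pose proof (Rf_sq p q t Hp Hq). pose proof (sc1 t).
  eapply dext. apply dmul. apply is_derive_cos. apply is_derive_inv. apply Rf_deriv; auto. lra.
  lazymatch goal with |- ?l = ?r => let l' := eval cbv beta in l in change (l' = r) end.
  set (R := Rf p q t) in *. set (s := sin t) in *. set (c := cos t) in *.
  apply (Rmult_eq_reg_r (R^3)); [| apply pow_nonzero; lra].
  field_simplify; [|lra|lra].
  all: try change (Rf p q t) with R. all: try change (sin t) with s. all: try change (cos t) with c.
  rewrite H0. apply Rminus_diag_uniq.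
  transitivity (s*q^2*(1 - (s^2+c^2))); [ring| rewrite H1; ring].
Qed.

Lemma b_bound p q (x y z bb F : R -> R) : 0 < q -> q <= p -> 0 < p -> p^2 + q^2 = 1 ->
  (forall t, is_derive x t (- (x t * z t))) ->
  (forall t, is_derive y t (y t * z t)) ->
  (forall t, is_derive z t (x t ^ 2 - y t ^ 2)) ->
  (forall t, is_derive bb t (2 * y t - bb t * z t)) ->
  x 0 = p -> y 0 = q -> z 0 = 0 -> bb 0 = 0 ->
  (forall t, is_derive F t (/ Rf p q t)) -> F 0 = 0 ->
  forall t, 0 <= t <= PI/2 -> bb (F t) <= 2 + 2 * q / p.
Proof.
  intros Hq Hqp Hp H1 Hx Hy Hz Hb Hx0 Hy0 Hz0 Hb0 HF HF0 t Ht.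
  assert (HU := uniq_traj p q x y z F Hq Hqp Hp H1 Hx Hy Hz Hx0 Hy0 Hz0 HF HF0).
  set (G := fun s => 2 * q^2 * (sin s * / Rf p q s) + 2 * p - 2 * p^2 * (cos s * / Rf p q s)).
  set (D := fun s => G s - bb (F s) * y (F s)).
  assert (HD : forall s, is_derive D s
     (2 * q^2 * (p^2 * cos s / Rf p q s ^ 3) - 2 * p^2 * (- (q^2 * sin s / Rf p q s ^ 3))
      - ((/ Rf p q s * (2 * y (F s) - bb (F s) * z (F s))) * y (F s) + bb (F s) * (/ Rf p q s * (y (F s) * z (F s)))))).
  { intros s. unfold D, G.
    apply (dminus (fun s => 2 * q^2 * (sin s * / Rf p q s) + 2 * p - 2 * p^2 * (cos s * / Rf p q s)) (fun s => bb (F s) * y (F s))).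
    - eapply dext. apply (dminus (fun s => 2 * q^2 * (sin s * / Rf p q s) + 2 * p) (fun s => 2 * p^2 * (cos s * / Rf p q s))).
      apply (dplus (fun s => 2 * q^2 * (sin s * / Rf p q s)) (fun s => 2 * p)).
      apply (dscal (fun s => sin s * / Rf p q s)). apply sR_deriv; auto.
      apply is_derive_const.
      apply (dscal (fun s => cos s * / Rf p q s)). apply cR_deriv; auto.
      unfold zero; simpl. ring.
    - apply (dmul (fun s => bb (F s)) (fun s => y (F s))).
      apply (dcomp bb F s). apply Hb. apply HF.
      apply (dcomp y F s). apply Hy. apply HF. }
  assert (HD0 : D 0 = 0).
  { unfold D, G. rewrite HF0, Hb0, sin_0, cos_0. unfold Rf. rewrite sin_0, cos_0.
    replace (p ^ 2 * 1 ^ 2 + q ^ 2 * 0 ^ 2) with (p^2) by ring.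
    rewrite sqrt_pow2 by lra. field. lra. }
  assert (HDt : D 0 <= D t).
  { apply (mono_deriv D _ 0 t ltac:(lra) HD). intros s Hs.
    destruct (HU s ltac:(lra)) as [_ [Hys _]]. rewrite Hys. unfold Yf.
    pose proof (Rf_pos p q s Hp Hq) as HR.
    assert (0 <= sin s) by (apply sin_ge_0; lra). assert (0 <= cos s) by (apply cos_ge_0; lra).
    pose proof (sc1 s).
    assert (1 <= sin s + cos s) by nra.
    replace (2 * q ^ 2 * (p ^ 2 * cos s / Rf p q s ^ 3) - 2 * p ^ 2 * - (q ^ 2 * sin s / Rf p q s ^ 3) -
      (/ Rf p q s * (2 * (p * q * / Rf p q s) - bb (F s) * z (F s)) * (p * q * / Rf p q s) +
       bb (F s) * (/ Rf p q s * (p * q * / Rf p q s * z (F s)))))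
      with (2 * p^2 * q^2 * (sin s + cos s - 1) / Rf p q s ^ 3) by (field; lra).
    unfold Rdiv. apply Rmult_le_pos; [nra | apply Rlt_le, Rinv_0_lt_compat, pow_lt; lra]. }
  destruct (HU t ltac:(lra)) as [_ [Hyt _]].
  rewrite HD0 in HDt. unfold D in HDt. rewrite Hyt in HDt. unfold Yf, G in HDt.
  pose proof (Rf_pos p q t Hp Hq) as HR. pose proof (Rf_sq p q t Hp Hq) as HR2.
  assert (0 <= sin t) by (apply sin_ge_0; lra). assert (0 <= cos t) by (apply cos_ge_0; lra).
  pose proof (sc1 t). pose proof (SIN_bound t).
  set (R := Rf p q t) in *. set (s := sin t) in *. set (c := cos t) in *. set (B := bb (F t)) in *.
  assert (HRle : R <= p * c + q * s).
  { assert (0 <= p*q*c*s) by (repeat apply Rmult_le_pos; lra).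
    assert (R^2 <= (p*c+q*s)^2) by (rewrite HR2; nra).
    destruct (Rle_lt_dec R (p*c+q*s)); auto. assert (0 <= p*c+q*s) by nra. nra. }
  assert (HB3 : B * (p * q) <= 2 * q^2 * s + 2 * p * R - 2 * p^2 * c).
  { assert (E : B * (p*q) = (B * (p * q * / R)) * R) by (field; lra).
    assert (E2 : 2 * q^2 * s + 2 * p * R - 2 * p^2 * c = (2 * q ^ 2 * (s * / R) + 2 * p - 2 * p ^ 2 * (c * / R)) * R) by (field; lra).
    rewrite E, E2. apply Rmult_le_compat_r; lra. }
  assert (H4 : B * (p * q) <= (2 + 2 * q / p) * (p * q)).
  { replace ((2 + 2 * q / p) * (p * q)) with (2 * p * q + 2 * q^2) by (field; lra).
    assert (p*R <= p*(p*c+q*s)) by (apply Rmult_le_compat_l; lra).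
    assert (q^2*s <= q^2*1) by (apply Rmult_le_compat_l; nra).
    assert (p*q*s <= p*q*1) by (apply Rmult_le_compat_l; nra). nra. }
  apply Rmult_le_reg_r in H4; [lra | nra].
Qed.

Lemma agm_add a b n m : agm_iter a b (n + m) = agm_iter (fst (agm_iter a b m)) (snd (agm_iter a b m)) n.
Proof.
  induction n.
  - simpl. destruct (agm_iter a b m); reflexivity.
  - simpl. rewrite IHn. reflexivity.
Qed.

Lemma agm_range a b n : 0 < a -> a <= b ->
  a <= fst (agm_iter a b n) <= b /\ a <= snd (agm_iter a b n) <= b.
Proof.
  intros Ha Hab. induction n; simpl; [lra|].
  destruct IHn as [[H1 H2] [H3 H4]].
  set (u := fst (agm_iter a b n)) in *. set (v := snd (agm_iter a b n)) in *.
  split; [lra|]. split.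
  - rewrite <- (sqrt_pow2 a) by lra. apply sqrt_le_1_alt. nra.
  - rewrite <- (sqrt_pow2 b) by lra. apply sqrt_le_1_alt. nra.
Qed.

Lemma agm_ord a b n : 0 < a -> 0 < b -> snd (agm_iter a b (S n)) <= fst (agm_iter a b (S n)).
Proof.
  intros Ha Hb. destruct (agm_pos a b n Ha Hb) as [H1 H2]. simpl.
  set (u := fst (agm_iter a b n)) in *. set (v := snd (agm_iter a b n)) in *.
  rewrite <- (sqrt_pow2 ((u+v)/2)) by lra. apply sqrt_le_1_alt. pose proof (pow2_ge_0 (u - v)). nra.
Qed.

Theorem lemma5p1 :
  forall eps : R, 0 < eps ->
  exists L0 : R, PI * sqrt 2 < L0 /\
  forall L : R, L0 < L ->
  forall alpha : R, 0 < alpha -> alpha < 1 / sqrt 2 -> L_of alpha = L ->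
  forall x0 y0 : R, 0 < y0 -> y0 < x0 ->
    x0 ^ 2 + y0 ^ 2 = 1 -> x0 * y0 = alpha ^ 2 ->
  forall x y z a b : R -> R,
    x 0 = x0 -> y 0 = y0 -> z 0 = 0 -> a 0 = 0 -> b 0 = 0 ->
    (forall t, is_derive x t (- (x t * z t))) ->
    (forall t, is_derive y t (y t * z t)) ->
    (forall t, is_derive z t (x t ^ 2 - y t ^ 2)) ->
    (forall t, is_derive a t (2 * x t + a t * z t)) ->
    (forall t, is_derive b t (2 * y t - b t * z t)) ->
    b (L / 2) < 2 + eps.
Proof.
  intros eps Heps.
  assert (Hse : 0 < sqrt eps) by (apply sqrt_lt_R0; lra).
  set (a1 := Rmin (1/2) (sqrt eps / 2)).
  assert (Ha1 : 0 < a1) by (apply Rmin_glb_lt; lra).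
  assert (Ha1' : a1 <= 1/2) by apply Rmin_l.
  assert (Ha1'' : a1 <= sqrt eps / 2) by apply Rmin_r.
  pose proof PI_RGT_0 as HPI.
  exists (PI / a1). split.
  { assert (H2 : sqrt 2 < 2).
    { assert (0 <= sqrt 2) by apply sqrt_pos. assert (sqrt 2 ^ 2 = 2) by (apply pow2_sqrt; lra). nra. }
    assert (2 <= 1 / a1). { apply (Rmult_le_reg_r a1); auto. field_simplify; lra. }
    unfold Rdiv. replace (PI * / a1) with (PI * (1 / a1)) by (unfold Rdiv; ring).
    apply Rmult_lt_compat_l; lra. }
  intros L HL alpha Hal0 Hal1 HLal x0 y0 Hy0 Hxy Hsum Hprod x y z a b Hx0 Hy0' Hz0 Ha0 Hb0 Hx Hy Hz Ha Hb.
  set (p := x0) in *. set (q := y0) in *.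
  assert (Hp : 0 < p) by lra.
  set (F := fun t => RInt (fun u => / Rf p q u) 0 t).
  assert (HF : forall t, is_derive F t (/ Rf p q t)).
  { intros t. apply (is_derive_RInt (fun u => / Rf p q u) F 0 t).
    - apply filter_forall. intros u. apply (RInt_correct (V:=R_CompleteNormedModule)).
      apply (ex_RInt_continuous (V:=R_CompleteNormedModule)). intros; apply invRf_cont; lra.
    - apply invRf_cont; lra. }
  assert (HF0 : F 0 = 0) by (unfold F; apply (RInt_point (V:=R_CompleteNormedModule))).
  set (tau := F (PI / 2)).
  assert (HLan : forall n, PI / 2 <= tau * Rmax (fst (agm_iter p q n)) (snd (agm_iter p q n))).
  { intros n. pose proof (landen_bound n p q F (PI/2) Hp Hy0 HF) as H. assert (HP2 : 0 <= PI/2) by lra. specialize (H HP2).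
    rewrite cos_PI2, Rmult_0_r in H. specialize (H eq_refl). rewrite HF0, Rminus_0_r in H. exact H. }
  set (beta := sqrt (1 + 2 * alpha ^ 2) / 2).
  assert (Hpq : (p + q) / 2 = beta).
  { unfold beta. f_equal. rewrite <- (sqrt_pow2 (p + q)) by lra. f_equal. nra. }
  assert (Hsq : sqrt (p * q) = alpha).
  { rewrite Hprod. apply sqrt_pow2. lra. }
  assert (Hab : alpha < beta).
  { assert (alpha ^ 2 < beta ^ 2).
    { unfold beta. replace ((sqrt (1 + 2 * alpha ^ 2) / 2) ^ 2) with (sqrt (1 + 2 * alpha ^ 2) ^ 2 / 4) by field.
      rewrite pow2_sqrt by nra. assert (alpha ^ 2 < 1/2).
      { assert (alpha * sqrt 2 < 1).
        { assert (0 < sqrt 2) by (apply sqrt_lt_R0; lra).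
          apply (Rmult_lt_compat_r (sqrt 2)) in Hal1; auto. field_simplify in Hal1; lra. }
        assert (sqrt 2 ^ 2 = 2) by (apply pow2_sqrt; lra).
        assert (0 < alpha * sqrt 2) by (apply Rmult_lt_0_compat; [lra| apply sqrt_lt_R0; lra]).
        assert ((alpha * sqrt 2)^2 < 1) by nra. nra. }
      lra. }
    assert (0 < beta) by (unfold beta; apply Rdiv_lt_0_compat; [apply sqrt_lt_R0; nra | lra]). nra. }
  set (u := fun n => fst (agm_iter alpha beta n)).
  assert (Hu : forall n, agm_iter p q (S n + 1) = agm_iter alpha beta (S n)).
  { intros n. rewrite agm_add.
    replace (agm_iter p q 1) with (beta, alpha) by (simpl; rewrite Hsq, Hpq; reflexivity).
    cbn [fst snd]. rewrite !agm_shift. f_equal; [field| f_equal; ring]. }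
  assert (Hlow : forall n, (1 <= n)%nat -> PI / 2 <= tau * u n).
  { intros n Hn. destruct n; [lia|].
    pose proof (HLan (S n + 1)%nat). rewrite Hu in H.
    rewrite Rmax_left in H. exact H. apply agm_ord; lra. }
  assert (Hrng : forall n, alpha <= u n <= beta).
  { intros n. destruct (agm_range alpha beta n Hal0 ltac:(lra)) as [H _]. exact H. }
  assert (Htau : 0 < tau).
  { pose proof (Hlow 1%nat (le_n 1)). pose proof (Hrng 1%nat). nra. }
  assert (HL1 : Rbar_le (PI / (2 * tau)) (Lim_seq u)).
  { rewrite <- (Lim_seq_const (PI / (2 * tau))). apply Lim_seq_le_loc. exists 1%nat. intros n Hn.
    pose proof (Hlow n Hn). apply (Rmult_le_reg_l (2 * tau)); [lra|]. field_simplify; lra. }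
  assert (HL2 : Rbar_le alpha (Lim_seq u)).
  { rewrite <- (Lim_seq_const alpha). apply Lim_seq_le_loc. exists 0%nat. intros n _. apply Hrng. }
  assert (HL3 : Rbar_le (Lim_seq u) beta).
  { rewrite <- (Lim_seq_const beta). apply Lim_seq_le_loc. exists 0%nat. intros n _. apply Hrng. }
  unfold L_of, AGM in HLal. fold beta in HLal. fold u in HLal.
  destruct (Lim_seq u) as [M| |] eqn:EM; simpl in HL1, HL2, HL3; try contradiction.
  simpl in HLal.
  assert (HM : 0 < M) by lra.
  assert (HLt : L <= 2 * tau).
  { rewrite <- HLal. apply (Rmult_le_reg_r M); auto. replace (PI / M * M) with PI by (field; lra).
    apply (Rmult_le_compat_r (2*tau)) in HL1; [|lra].
    replace (PI/(2*tau)*(2*tau)) with PI in HL1 by (field; lra). lra. }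
  assert (HLa : L <= PI / alpha).
  { rewrite <- HLal. unfold Rdiv. apply Rmult_le_compat_l; [lra|]. apply Rinv_le_contravar; lra. }
  assert (Hala : alpha < a1).
  { destruct (Rlt_le_dec alpha a1) as [h|h]; auto.
    assert (PI / alpha <= PI / a1). { unfold Rdiv. apply Rmult_le_compat_l; [lra|]. apply Rinv_le_contravar; lra. }
    lra. }
  assert (HL0 : 0 < L).
  { assert (0 < PI / a1) by (apply Rdiv_lt_0_compat; lra). lra. }
  assert (HFc : continuity F).
  { intros t. apply (deriv_cont F (fun t => / Rf p q t) HF). }
  destruct (IVT_gen F 0 (PI/2) (L/2) HFc) as [phi [Hphi HFphi]].
  { fold tau. rewrite HF0. rewrite Rmin_left by lra. rewrite Rmax_right by lra. lra. }
  rewrite Rmin_left in Hphi by lra. rewrite Rmax_right in Hphi by lra.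
  rewrite <- HFphi.
  assert (HB := b_bound p q x y z b F Hy0 ltac:(lra) Hp Hsum Hx Hy Hz Hb Hx0 Hy0' Hz0 Hb0 HF HF0 phi Hphi).
  assert (Hq2 : 2 * q / p < eps).
  { assert (Hp2 : 1/2 < p^2) by nra.
    assert (Hal2 : alpha^2 < eps/4).
    { assert (alpha < sqrt eps / 2) by lra.
      assert (sqrt eps ^ 2 = eps) by (apply pow2_sqrt; lra). nra. }
    assert (E : 2 * q / p = 2 * alpha^2 / p^2) by (rewrite <- Hprod; field; lra).
    rewrite E. apply (Rmult_lt_reg_r (p^2)); [nra|]. field_simplify; [|lra]. nra. }
  lra.
Qed.
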